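(* Let $d\ge 2$ and let $\mathcal A$ be the space of closed curves with constant speed parametrization defined below, equipped with the Riemannian metric $\langle v,w\rangle_{T_\eta\mathcal A}=L(\eta)\int_0^1 v(s)\cdot w(s)\,ds$. Then the associated Riemannian distance $d_{\mathcal A}$ is non-degenerate: for all $\eta_0,\eta_1\in\mathcal A$ with $\eta_0\neq\eta_1$ one has $d_{\mathcal A}(\eta_0,\eta_1)>0$.
   Context: $\mathbb S^1=\mathbb R/\mathbb Z$. $\mathcal K=\{\eta\in H^2(\mathbb S^1;\mathbb R^d):\int_0^1\eta(s)\,ds=0\}$, $L(\eta)=\int_0^1|\partial_s\eta|\,ds$, and $\mathcal A=\{\eta\in\mathcal K: |\partial_s\eta(s)|=L(\eta)>0\ \text{for all } s\in\mathbb S^1\}$, a smooth Hilbert submanifold of $\mathcal K$. For a $C^1$ path $\eta:[0,1]\to\mathcal A$ its Riemannian length is $\int_0^1\|\dot\eta(t)\|_{L^2(\mathbb S^1)}\sqrt{L(\eta(t))}\,dt$, and $d_{\mathcal A}(\eta_0,\eta_1)$ is the infimum of the lengths of such paths with $\eta(0)=\eta_0$, $\eta(1)=\eta_1$. *)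

(* Defs.v *)
(* Curves in R^d are represented componentwise as
   families  eta : 'I_d -> R -> R  of 1-periodic real functions on R
   (functions on S^1 = R/Z), with R : realType. *)
From HB Require Import structures.
From mathcomp Require Import all_boot all_order all_algebra.
From mathcomp Require Import all_classical all_reals all_analysis.
Set Implicit Arguments. Unset Strict Implicit. Unset Printing Implicit Defensive.
Import Order.TTheory GRing.Theory Num.Theory.
Import numFieldNormedType.Exports.
Local Open Scope classical_set_scope.
Local Open Scope ring_scope.

Section Curves.
Variable R : realType.
Local Notation mu := (@lebesgue_measure R).

Definition I01 : set R := `[0, 1]%classic.

Definition periodic1 (f : R -> R) : Prop := forall s, f (s + 1) = f s.

Definition sq_int01 (g : R -> R) : Prop :=
  measurable_fun I01 g /\
  (\int[mu]_(x in I01) ((g x ^+ 2)%:E) < +oo)%E.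

(* f : S^1 -> R lies in H^2(S^1), with weak second derivative g:
   f is 1-periodic and C^1 (differentiable everywhere, hence f' is periodic),
   and f' is the primitive of the square integrable function g. *)
Definition H2w (f g : R -> R) : Prop :=
  [/\ periodic1 f, (forall x, derivable f x 1), sq_int01 g &
      forall t, 0 <= t <= 1 ->
        derive1 f t = derive1 f 0 + Rintegral mu `[0, t]%classic g].

Definition H2 (f : R -> R) : Prop := exists g, H2w f g.

Variable d : nat.
Definition curve := 'I_d -> R -> R.

Definition speed (eta : curve) (s : R) : R :=
  Num.sqrt (\sum_(i < d) (derive1 (eta i) s) ^+ 2).

Definition curve_length (eta : curve) : R := Rintegral mu I01 (speed eta).

Definition inK (eta : curve) : Prop :=
  (forall i, H2 (eta i)) /\ (forall i, Rintegral mu I01 (eta i) = 0).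

Definition inA (eta : curve) : Prop :=
  [/\ inK eta, 0 < curve_length eta & forall s, speed eta s = curve_length eta].

Definition H2sq (f f2 : curve) : R :=
  \sum_(i < d) (Rintegral mu I01 (fun s => f i s ^+ 2)
              + Rintegral mu I01 (fun s => derive1 (f i) s ^+ 2)
              + Rintegral mu I01 (fun s => f2 i s ^+ 2)).

Definition L2norm (f : curve) : R :=
  Num.sqrt (\sum_(i < d) Rintegral mu I01 (fun s => f i s ^+ 2)).

(* gam : [0,1] -> A is a C^1 path (as a map into the Hilbert space H^2),
   with velocity gdot; G and Gdot are the weak second s-derivatives of
   gam t and gdot t (used to evaluate H^2 norms). *)
Definition C1_path_A (gam G gdot Gdot : R -> curve) : Prop :=
  [/\ (forall t, 0 <= t <= 1 -> inA (gam t) /\ forall i, H2w (gam t i) (G t i)),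
      (forall t, 0 <= t <= 1 -> forall i, H2w (gdot t i) (Gdot t i)),
      (forall t, 0 <= t <= 1 ->
         (fun h => Num.sqrt (H2sq
             (fun i s => (gam (t + h) i s - gam t i s) / h - gdot t i s)
             (fun i s => (G (t + h) i s - G t i s) / h - Gdot t i s)))
         @ within (fun h => h != 0 /\ 0 <= t + h <= 1) (nbhs 0) --> 0) &
      (forall t, 0 <= t <= 1 ->
         (fun u => Num.sqrt (H2sq
             (fun i s => gdot u i s - gdot t i s)
             (fun i s => Gdot u i s - Gdot t i s)))
         @ within (fun u => 0 <= u <= 1) (nbhs t) --> 0)].

Definition path_length (gam gdot : R -> curve) : \bar R :=
  (\int[mu]_(t in I01)
      (L2norm (gdot t) * Num.sqrt (curve_length (gam t)))%:E)%E.

(* d_A(eta0, eta1) = inf of lengths of C^1 paths in A from eta0 to eta1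
   (extended real; +oo if there is no such path) *)
Definition distA (eta0 eta1 : curve) : \bar R :=
  ereal_inf [set l | exists gam G gdot Gdot,
     [/\ C1_path_A gam G gdot Gdot, gam 0 = eta0, gam 1 = eta1 &
         l = path_length gam gdot]].

End Curves.

(* Main.v *)
Require Import Defs.
From HB Require Import structures.
From mathcomp Require Import all_boot all_order all_algebra.
From mathcomp Require Import all_classical all_reals all_analysis.
Import Order.TTheory GRing.Theory Num.Theory.
Import numFieldNormedType.Exports.
Local Open Scope classical_set_scope.
Local Open Scope ring_scope.
From mathcomp Require Import ring lra.
Section S.
Variable R : realType.
Local Notation mu := (@lebesgue_measure R).
Local Notation J := (@I01 R).

Lemma mI01 : measurable J.
Proof. exact: measurable_itv. Qed.

Lemma mu01 : mu J = 1%E.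
Proof. by rewrite /I01 lebesgue_measure_itv/= lte_fin ltr01 oppr0 adde0. Qed.

Lemma int01 (f : R -> R) : continuous f -> mu.-integrable J (EFin \o f).
Proof.
move=> cf; apply: continuous_compact_integrable; first exact: segment_compact.
exact: continuous_subspaceT.
Qed.

Lemma Rint_cst01 (c : R) : Rintegral mu J (fun=> c) = c.
Proof. rewrite Rintegral_cst; last exact: measurable_itv. have h := @lebesgue_measure_itv R `[0, 1]%R.
rewrite /= lte_fin ltr01 oppr0 adde0 in h.
have -> : fine (mu J) = 1 by rewrite [mu J]h.
by rewrite mulr1. Qed.

Lemma nomeas_le (D : set R) (f1 f2 : R -> \bar R) :
  (forall x, D x -> (0 <= f1 x)%E) -> (forall x, D x -> (f1 x <= f2 x)%E) ->
  (\int[mu]_(x in D) f1 x <= \int[mu]_(x in D) f2 x)%E.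
Proof.
move=> f10 f12.
have f20 : forall x, D x -> (0 <= f2 x)%E.
  by move=> x Dx; apply: le_trans (f10 _ Dx) (f12 _ Dx).
rewrite !ge0_integralE//.
apply: le_ereal_sup => _ [h /= hf <-]; exists h => //= x.
apply: le_trans (hf x) _; rewrite /patch; case: ifP => // /[1!inE] Dx.
exact: f12.
Qed.

Lemma der_cont (f : R -> R) : (forall x, derivable f x 1) -> continuous f.
Proof. by move=> df x; apply: differentiable_continuous; exact/derivable1_diffP. Qed.

Lemma contM (f g : R -> R) : continuous f -> continuous g -> continuous (fun s => f s * g s).
Proof. by move=> cf cg x; apply: cvgM; [exact: cf|exact: cg]. Qed.
Lemma contB (f g : R -> R) : continuous f -> continuous g -> continuous (fun s => f s - g s).
Proof. by move=> cf cg x; apply: cvgB; [exact: cf|exact: cg]. Qed.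
Lemma contD (f g : R -> R) : continuous f -> continuous g -> continuous (fun s => f s + g s).
Proof. by move=> cf cg x; apply: cvgD; [exact: cf|exact: cg]. Qed.
Lemma contZ (c : R) (f : R -> R) : continuous f -> continuous (fun s => c * f s).
Proof. by move=> cf x; apply: cvgM; [exact: cvg_cst|exact: cf]. Qed.
Lemma contX (f : R -> R) : continuous f -> continuous (fun s => f s ^+ 2).
Proof. by move=> cf; apply: (@contM f f). Qed.

Local Notation RI f := (Rintegral mu J f).

Lemma RID (f g : R -> R) : continuous f -> continuous g ->
  RI (fun s => f s + g s) = RI f + RI g.
Proof. by move=> cf cg; rewrite RintegralD //; [exact: mI01|exact: int01|exact: int01]. Qed.
Lemma RIB (f g : R -> R) : continuous f -> continuous g ->
  RI (fun s => f s - g s) = RI f - RI g.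
Proof. by move=> cf cg; rewrite RintegralB //; [exact: mI01|exact: int01|exact: int01]. Qed.
Lemma RIZ (c : R) (f : R -> R) : continuous f ->
  RI (fun s => c * f s) = c * RI f.
Proof. by move=> cf; rewrite RintegralZl //; [exact: mI01|exact: int01]. Qed.
Lemma RIsq_ge0 (f : R -> R) : 0 <= RI (fun s => f s ^+ 2).
Proof. by apply: Rintegral_ge0 => x _; exact: sqr_ge0. Qed.

Lemma CS2 (f w : R -> R) : continuous f -> continuous w ->
  (RI (fun s => f s * w s)) ^+ 2 <= RI (fun s => f s ^+ 2) * RI (fun s => w s ^+ 2).
Proof.
move=> cf cw.
set X := RI (fun s => f s * w s); set A := RI (fun s => f s ^+ 2); set B := RI (fun s => w s ^+ 2).
have A0 : 0 <= A by apply: Rintegral_ge0 => x _; exact: sqr_ge0.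
have B0 : 0 <= B by apply: Rintegral_ge0 => x _; exact: sqr_ge0.
have hq l : 0 <= A - 2 * l * X + l ^+ 2 * B.
  have -> : A - 2 * l * X + l ^+ 2 * B = RI (fun s => (f s - l * w s) ^+ 2).
    have -> : (fun s => (f s - l * w s) ^+ 2) =
      (fun s => f s ^+ 2 + ((- (2 * l)) * (f s * w s) + l ^+ 2 * (w s ^+ 2))).
      by apply/funext => s; ring.
    rewrite RID; [|exact: contX|apply: contD; apply: contZ; [exact: contM|exact: contX]].
    rewrite RID; [|apply: contZ; exact: contM|apply: contZ; exact: contX].
    rewrite RIZ; last exact: contM.
    rewrite RIZ; last exact: contX.
    rewrite -/A -/X -/B; ring.
  exact: RIsq_ge0.
have [B0'|Bp] := eqVneq B 0.
  have [X0|Xn] := eqVneq X 0; first by rewrite X0 expr0n /= mulr_ge0.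
  have := hq ((A + 1) / (2 * X)).
  have e : 2 * ((A + 1) / (2 * X)) * X = A + 1 by field; rewrite Xn.
  by rewrite B0' mulr0 addr0 e; lra.
have Bpos : 0 < B by rewrite lt_def Bp B0.
have := hq (X / B).
have e : (X / B) ^+ 2 * B = X ^+ 2 / B by field.
rewrite e => h.
have : 0 <= (A - 2 * (X / B) * X + X ^+ 2 / B) * B by apply: mulr_ge0 => //; lra.
have -> : (A - 2 * (X / B) * X + X ^+ 2 / B) * B = A * B - X ^+ 2 by field.
lra.
Qed.

Lemma CS (f w : R -> R) : continuous f -> continuous w ->
  `|RI (fun s => f s * w s)| <= Num.sqrt (RI (fun s => f s ^+ 2)) * Num.sqrt (RI (fun s => w s ^+ 2)).
Proof.
move=> cf cw; rewrite -sqrtrM; last by apply: Rintegral_ge0 => x _; exact: sqr_ge0.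
by rewrite -sqrtr_sqr; apply: ler_wsqrtr; exact: CS2.
Qed.

Lemma contN (f : R -> R) : continuous f -> continuous (fun s => `|f s|).
Proof. by move=> cf x; apply: cvg_norm; exact: cf. Qed.
Lemma contC (c : R) : continuous (fun _ : R => c).
Proof. by move=> x; exact: cvg_cst. Qed.

Lemma inJ (x : R) : J x <-> 0 <= x <= 1.
Proof. by rewrite /I01 /= in_itv. Qed.

Variable d : nat.

Lemma inA_der (eta : curve R d) : inA eta -> forall i x, derivable (eta i) x 1.
Proof. by case=> [[hH _] _ _] i x; have [g [_ hd _ _]] := hH i; exact: hd. Qed.

Lemma inA_cont (eta : curve R d) : inA eta -> forall i, continuous (eta i).
Proof. by move=> hA i; apply: der_cont; exact: inA_der. Qed.

Lemma comp_le_sqrt (a : 'I_d -> R) i : `|a i| <= Num.sqrt (\sum_(j < d) a j ^+ 2).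
Proof.
rewrite -sqrtr_sqr; apply: ler_wsqrtr.
rewrite (bigD1 i) //= lerDl; apply: sumr_ge0 => j _; exact: sqr_ge0.
Qed.

Lemma lipA (eta : curve R d) i s x : inA eta -> 0 <= s <= 1 -> 0 <= x <= 1 ->
  `|eta i s - eta i x| <= curve_length eta.
Proof.
move=> hA.
have key : forall s x, 0 <= x -> x < s -> s <= 1 ->
    `|eta i s - eta i x| <= curve_length eta.
  move=> {}s {}x x0 xs s1.
  have [c _ ->] := @MVT R (eta i) (derive1 (eta i)) x s xs
    (fun y _ => ltac:(rewrite derive1E; apply: derivableP; exact: (@inA_der eta hA)))
    (continuous_subspaceT (@inA_cont eta hA i)).
  have hL := hA; case: hL => _ L0 hsp.
  have xs0 : 0 < s - x by rewrite subr_gt0.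
  rewrite normrM (gtr0_norm xs0).
  have h1 : `|derive1 (eta i) c| <= curve_length eta.
    by rewrite -(hsp c); exact: (comp_le_sqrt (fun j => derive1 (eta j) c)).
  have h2 : s - x <= 1 by lra.
  have h3 : 0 <= `|derive1 (eta i) c| by [].
  nra.
move=> /andP[s0 s1] /andP[x0 x1].
have L0 : 0 <= curve_length eta by case: hA => _ /ltW.
have [xs|sx|<-] := ltgtP x s; first exact: key.
  by rewrite distrC; exact: key.
by rewrite subrr normr0.
Qed.

Lemma supA (eta : curve R d) i s : inA eta -> 0 <= s <= 1 ->
  `|eta i s| <= curve_length eta.
Proof.
move=> hA hs.
have hc := @inA_cont eta hA i.
have mean0 : RI (eta i) = 0 by case: hA => [[_ h] _ _]; exact: h.
have -> : eta i s = RI (fun x => eta i s - eta i x).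
  by rewrite RIB //; [rewrite Rint_cst01 mean0 subr0|exact: contC].
apply: le_trans (le_normr_Rintegral _ _) _.
- exact: mI01.
- by apply: int01; apply: contB => //; exact: contC.
rewrite -[X in _ <= X]Rint_cst01.
apply: le_Rintegral.
- exact: mI01.
- by apply: int01; apply: contN; apply: contB => //; exact: contC.
- exact: int01 (contC _).
by move=> x /inJ hx; exact: lipA.
Qed.

Lemma gbound (eta : curve R d) i (w : R -> R) : inA eta -> continuous w ->
  `|RI (fun s => eta i s * w s)| <= curve_length eta * RI (fun s => `|w s|).
Proof.
move=> hA cw.
have hc := @inA_cont eta hA i.
apply: le_trans (le_normr_Rintegral _ _) _.
- exact: mI01.
- by apply: int01; apply: contM.
rewrite -RIZ; last exact: contN.
apply: le_Rintegral.
- exact: mI01.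
- by apply: int01; apply: contN; apply: contM.
- by apply: int01; apply: contZ; apply: contN.
move=> x /inJ hx; rewrite normrM ler_wpM2r //; exact: supA.
Qed.

Lemma pos_int (D : R -> R) s0 : continuous D -> 0 <= s0 <= 1 -> D s0 != 0 ->
  0 < RI (fun s => D s ^+ 2).
Proof.
move=> cD hs0 Dn.
set f := fun s => D s ^+ 2.
have cf : continuous f by exact: contX.
set c := f s0.
have c0 : 0 < c by rewrite /c /f lt_def sqrf_eq0 Dn sqr_ge0.
have := cf s0; move/cvgrPdist_lt => /(_ (c / 2)).
have c20 : 0 < c / 2 by lra.
move=> /(_ c20) /nbhs_ballP [del /= del0 hb].
have hI := @int01 f cf.
have mf := measurable_int _ hI.
have ffin : (\int[mu]_(x in J) (f x)%:E)%E \is a fin_num.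
  by apply: (integrable_fin_num _ hI); exact: mI01.

set e := Num.min (del / 2) (1 / 2).
have e0 : 0 < e by rewrite lt_min; apply/andP; split; lra.
have ed : e <= del / 2 by rewrite ge_min lexx.
have e2 : e <= 1 / 2 by rewrite ge_min lexx orbT.
case/andP: hs0 => s00 s01.
have [p [p0 pe1 ps0 s0p]] : exists p, [/\ 0 <= p, p + e <= 1, p <= s0 & s0 <= p + e].
  have [h|h] := lerP (s0 + e) 1.
    by exists s0; split => //; lra.
  by exists (s0 - e); split; lra.
have hlow x : p <= x <= p + e -> c / 2 <= f x.
  move=> /andP[px xp].
  have : ball s0 del x.
    rewrite /ball /=.
    have : `|s0 - x| <= e by rewrite ler_norml; apply/andP; split; lra.
    lra.
  move/hb; rewrite /c => h.
  have := ler_norm (f s0 - f x); lra.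
have f0 x : (0 <= (f x)%:E)%E by rewrite lee_fin /f sqr_ge0.
pose Ki := `[p, p + e]%R.
have hsub : [set` Ki] `<=` J.
  move=> x; rewrite /= in_itv /= => /andP[? ?]; apply/inJ; apply/andP; split; lra.
have le1 : (\int[mu]_(x in [set` Ki]) (f x)%:E <= \int[mu]_(x in J) (f x)%:E)%E.
  apply: ge0_subset_integral => //; try exact: measurable_itv; try exact: mI01; try (by move=> x _; exact: f0).
have le2 : (\int[mu]_(x in [set` Ki]) (c / 2)%:E <= \int[mu]_(x in [set` Ki]) (f x)%:E)%E.
  apply: nomeas_le => x; first by rewrite lee_fin; lra.
  by rewrite /= in_itv /= => hx; rewrite lee_fin; exact: hlow.
have e3 : (\int[mu]_(x in [set` Ki]) (c / 2)%:E = (c / 2 * e)%:E)%E.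
  rewrite integral_cst; last exact: measurable_itv.
  have h := @lebesgue_measure_itv R Ki.
  transitivity ((c / 2)%:E * mu [set` Ki])%E; first by []. 
  rewrite h /= lte_fin ltrDl e0 -EFinD -EFinM.
  by congr (_%:E); ring.
rewrite /Rintegral; apply: fine_gt0; apply/andP; split.
  apply: lt_le_trans le1; apply: lt_le_trans le2; rewrite e3 lte_fin.
  by apply: mulr_gt0.
by move: ffin; rewrite fin_numE => /andP[_ /eqP h]; rewrite ltey; apply/eqP.
Qed.

Lemma per_nat (f : R -> R) : periodic1 f -> forall (k : nat) x, f (x + k%:R) = f x.
Proof.
move=> hf; elim=> [|k ih] x; first by rewrite addr0.
by rewrite -natr1 addrA hf ih.
Qed.

Lemma per_int (f : R -> R) : periodic1 f -> forall (n : int) x, f (x + n%:~R) = f x.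
Proof.
move=> hf [k|k] x; first exact: per_nat.
rewrite NegzE -{2}(subrK ((k.+1)%:R) x) per_nat //.
Qed.

Lemma per_eq (f g : R -> R) : periodic1 f -> periodic1 g ->
  (forall s, 0 <= s <= 1 -> f s = g s) -> f = g.
Proof.
move=> hf hg he; apply/funext => s.
set n := Num.floor s.
have h1 : n%:~R <= s := Num.Theory.floor_le s.
have h2 : s < (n + 1)%:~R := real_floorD1_gt (num_real s).
rewrite intrD in h2.
have -> : s = (s - n%:~R) + n%:~R by rewrite subrK.
rewrite per_int // per_int //; apply: he; apply/andP; split; lra.
Qed.

Lemma within_sub (F : set_system R) {FF : Filter F} (A B : set R) (f : R -> R) (l : R) :
  (\forall x \near F, B x -> A x) -> f @ within A F --> l -> f @ within B F --> l.
Proof.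
move=> hBA hf P /hf; rewrite /within /= => hA.
by apply: filterS2 hBA hA => x h1 h2 /h1 /h2.
Qed.

Lemma squeeze0 (F : set_system R) {FF : Filter F} (u v : R -> R) (l c : R) :
  (\forall x \near F, `|u x - l| <= v x * c) -> v @ F --> 0 -> u @ F --> l.
Proof.
move=> hb hv; apply/cvgrPdist_le => e e0.
have c1 : 0 < `|c| + 1 by rewrite ltr_pwDr // normr_ge0.
have := hv; move/cvgrPdist_le => /(_ (e / (`|c| + 1))) /(_ (divr_gt0 e0 c1)).
apply: filterS2 hb => x h1 h2.
rewrite sub0r normrN in h2.
rewrite distrC; apply: le_trans h1 _.
apply: le_trans (ler_norm _) _; rewrite normrM.
have : `|v x| * `|c| <= e / (`|c| + 1) * `|c| by apply: ler_wpM2r.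
have : e / (`|c| + 1) * `|c| <= e.
  rewrite mulrAC ler_pdivrMr // ler_pM2l //; lra.
lra.
Qed.

Lemma dq_cont (phi : R -> R) (t l r : R) (S S' : set R) : 0 < r ->
  (forall u, S' u -> `|t - u| < r -> S u) ->
  (fun h => (phi (t + h) - phi t) / h) @ within (fun h => h != 0 /\ S (t + h)) (nbhs 0) --> l ->
  phi @ within S' (nbhs t) --> phi t.
Proof.
move=> r0 hS hc; apply/cvgrPdist_le => e e0.
move: hc => /cvgrPdist_le /(_ 1 ltr01); rewrite near_withinE => /nbhs_ballP [del /= del0 hb].
have l1 : 0 < `|l| + 1 by rewrite ltr_pwDr // normr_ge0.
set rho := Num.min (Num.min del r) (e / (`|l| + 1)).
have rho0 : 0 < rho by rewrite !lt_min del0 r0 divr_gt0.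
exists rho => // u /= hu hSu.
have hu' : `|t - u| < rho by move: hu; rewrite /ball /=.
have [->|hne] := eqVneq u t; first by rewrite subrr normr0 ltW.
set h := u - t.
have hn : h != 0 by rewrite subr_eq0.
have hu1 : `|t - u| < del by apply: lt_le_trans hu' _; rewrite /rho !ge_min lexx.
have hu2 : `|t - u| < r by apply: lt_le_trans hu' _; rewrite /rho !ge_min lexx orbT.
have hu3 : `|t - u| <= e / (`|l| + 1) by apply: ltW; apply: lt_le_trans hu' _; rewrite /rho ge_min lexx orbT.
have hth : t + h = u by rewrite /h addrC subrK.
have hbh : ball (0 : R) del h by rewrite /ball /= sub0r normrN /h distrC.
have := hb h hbh; rewrite hth => /(_ (conj hn (hS u hSu hu2))).
set q := (phi u - phi t) / h => hq.
have eq1 : phi t - phi u = - (h * q) by rewrite /q mulrC divfK // opprB.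
rewrite eq1 normrN normrM.
have hq' : `|q| <= `|l| + 1.
  have e2 : q = l + (q - l) by rewrite addrC subrK.
  rewrite {1}e2; apply: le_trans (ler_normD _ _) _.
  by rewrite lerD2l distrC.
have hh : `|h| <= e / (`|l| + 1) by rewrite /h distrC.
apply: le_trans (ler_pM _ _ hh hq') _ => //.
by rewrite divfK // gt_eqF.
Qed.

Lemma comp_le_H2sq (f f2 : curve R d) i : RI (fun s => f i s ^+ 2) <= H2sq f f2.
Proof.
rewrite /H2sq (bigD1 i) //=.
have hB : 0 <= RI (fun s => derive1 (f i) s ^+ 2) := RIsq_ge0 _.
have hC : 0 <= RI (fun s => f2 i s ^+ 2) := RIsq_ge0 _.
have hS : 0 <= \sum_(j < d | j != i) (RI (fun s => f j s ^+ 2) +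
    RI (fun s => derive1 (f j) s ^+ 2) + RI (fun s => f2 j s ^+ 2)).
  apply: sumr_ge0 => j _; apply: addr_ge0; first apply: addr_ge0; exact: RIsq_ge0.
lra.
Qed.

Lemma comp_le_L2 (f : curve R d) i : Num.sqrt (RI (fun s => f i s ^+ 2)) <= L2norm f.
Proof.
rewrite /L2norm; apply: ler_wsqrtr.
rewrite (bigD1 i) //= lerDl; apply: sumr_ge0 => j _; exact: RIsq_ge0.
Qed.

Lemma CSw (f w : R -> R) : continuous f -> continuous w ->
  `|RI (fun s => f s * w s)| <= Num.sqrt (RI (fun s => f s ^+ 2)) * Num.sqrt (RI (fun s => w s ^+ 2)).
Proof. exact: CS. Qed.

Definition H (x : R) := x ^+ 3 / (1 + x ^+ 2).
Definition Hp (x : R) := x ^+ 2 * (3 + x ^+ 2) / (1 + x ^+ 2) ^+ 2.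

Lemma one_sq_gt0 (x : R) : 0 < 1 + x ^+ 2.
Proof. by rewrite ltr_pwDl // sqr_ge0. Qed.

Lemma H_der (f : R -> R) (t df : R) : is_derive t 1 f df ->
  is_derive t 1 (fun y => H (f y)) (Hp (f t) * df).
Proof.
move=> hf.
have nz : (cst 1 + f ^+ 2) t != 0.
  by rewrite !fctE gt_eqF // one_sq_gt0.
have dd := is_deriveM (is_deriveX 3 hf)
  (is_deriveV nz (is_deriveD (is_derive_cst (1 : R) t 1) (is_deriveX 2 hf))).
have e : (f ^+ 3 * (fun y => ((cst 1 + f ^+ 2) y)^-1)) = (fun y => H (f y)).
  by rewrite !fctE /H; apply/funext.
rewrite -e; apply: is_derive_eq dd _.
move: nz; rewrite !fctE /Hp => nz.
rewrite /GRing.scale /=.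
set y := f t; move: nz; set q := 1 + y ^+ 2 => nz.
have eq : q = 1 + y ^+ 2 by [].
rewrite eq in nz *.
field.
by [].
Qed.

Lemma Hp_ge0 (x : R) : 0 <= Hp x.
Proof.
rewrite /Hp; apply: divr_ge0; last exact: sqr_ge0.
by apply: mulr_ge0; [exact: sqr_ge0|rewrite addr_ge0 // sqr_ge0].
Qed.

Lemma Hp_bound (x : R) : Hp x <= 3 * Num.sqrt `|x|.
Proof.
set a := `|x|.
have a0 : 0 <= a by exact: normr_ge0.
have ya : x ^+ 2 = a ^+ 2 by rewrite /a real_normK // num_real.
set y := x ^+ 2.
have q0 : 0 < 1 + y := one_sq_gt0 x.
have e : Hp x ^+ 2 = (y * (3 + y)) ^+ 2 / (1 + y) ^+ 4.
  rewrite /Hp -/y; field; rewrite gt_eqF //.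
have key : (y * (3 + y)) ^+ 2 <= 9 * a * (1 + y) ^+ 4.
  rewrite /y ya.
  have h1 : 0 <= a ^+ 3 * (a - 1) ^+ 2 by apply: mulr_ge0; [exact: exprn_ge0|exact: sqr_ge0].
  have hs : 0 <= a ^+ 2 := sqr_ge0 a.
  have h2 : (3 + a ^+ 2) <= 3 * (1 + a ^+ 2) by lra.
  have h3 : a ^+ 4 <= a * (1 + a ^+ 2) ^+ 2 by nra.
  have h4 : 0 <= 3 + a ^+ 2 by rewrite addr_ge0 // sqr_ge0.
  have h5 : (3 + a ^+ 2) ^+ 2 <= 9 * (1 + a ^+ 2) ^+ 2.
    have : (3 + a ^+ 2) * (3 + a ^+ 2) <= (3 * (1 + a ^+ 2)) * (3 * (1 + a ^+ 2)).
      by apply: ler_pM => //.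
    by rewrite -!expr2 exprMn; lra.
  have h6 : 0 <= (1 + a ^+ 2) ^+ 2 by exact: sqr_ge0.
  have -> : (a ^+ 2 * (3 + a ^+ 2)) ^+ 2 = a ^+ 4 * (3 + a ^+ 2) ^+ 2 by ring.
  have -> : 9 * a * (1 + a ^+ 2) ^+ 4 = 9 * (a * (1 + a ^+ 2) ^+ 2) * (1 + a ^+ 2) ^+ 2 by ring.
  have h7 : 0 <= a ^+ 4 by exact: exprn_ge0.
  nra.
have hsq : Hp x ^+ 2 <= 9 * a.
  by rewrite e ler_pdivrMr ?exprn_gt0.
have -> : Hp x = Num.sqrt (Hp x ^+ 2) by rewrite sqrtr_sqr ger0_norm // Hp_ge0.
have -> : 3 = Num.sqrt (3 ^+ 2) :> R by rewrite sqrtr_sqr ger0_norm.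
rewrite -sqrtrM; last exact: sqr_ge0.
by apply: ler_wsqrtr; rewrite expr2; lra.
Qed.

Lemma H_inj (a b : R) : H a = H b -> a = b.
Proof.
move=> e.
have qa := one_sq_gt0 a; have qb := one_sq_gt0 b.
have ea : a ^+ 3 = H a * (1 + a ^+ 2) by rewrite /H divfK // gt_eqF.
have eb : b ^+ 3 = H b * (1 + b ^+ 2) by rewrite /H divfK // gt_eqF.
have e2 : a ^+ 3 * (1 + b ^+ 2) = b ^+ 3 * (1 + a ^+ 2).
  by rewrite ea eb e; ring.
have e3 : (a - b) * (a ^+ 2 + a * b + b ^+ 2 + a ^+ 2 * b ^+ 2) = 0.
  by rewrite -(subrr (b ^+ 3 * (1 + a ^+ 2))) -{1}e2; ring.
move: e3 => /eqP; rewrite mulf_eq0 => /orP[/eqP h|/eqP h]; first by apply/eqP; rewrite -subr_eq0 h.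
have s1 := sqr_ge0 (a + b); have s2 := sqr_ge0 a; have s3 := sqr_ge0 b.
have s4 : 0 <= a ^+ 2 * b ^+ 2 by apply: mulr_ge0.
have e4 : (a + b) ^+ 2 = a ^+ 2 + 2 * (a * b) + b ^+ 2 by ring.
have ha : a ^+ 2 = 0 by lra.
have hb : b ^+ 2 = 0 by lra.
by move/eqP: ha; rewrite sqrf_eq0 => /eqP ->; move/eqP: hb; rewrite sqrf_eq0 => /eqP ->.
Qed.


Lemma cvgXn (F : set_system R) {FF : Filter F} (f : R -> R) (a : R) (n : nat) :
  f @ F --> a -> (fun y => f y ^+ n) @ F --> a ^+ n.
Proof.
move=> hf; elim: n => [|n ih].
  have -> : (fun y => f y ^+ 0) = (fun=> 1) by apply/funext => y; rewrite expr0.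
  by rewrite expr0; exact: cvg_cst.
have -> : (fun y => f y ^+ n.+1) = (fun y => f y * f y ^+ n).
  by apply/funext => y; rewrite exprS.
by rewrite exprS; exact: cvgM.
Qed.

Lemma H_cvg (F : set_system R) {FF : Filter F} (f : R -> R) (a : R) :
  f @ F --> a -> (fun y => H (f y)) @ F --> H a.
Proof.
move=> hf; rewrite /H; apply: cvgM; first exact: cvgXn.
apply: cvgV; first by rewrite gt_eqF // one_sq_gt0.
by apply: cvgD; [exact: cvg_cst|exact: cvgXn].
Qed.

Lemma Hp_cvg (F : set_system R) {FF : Filter F} (f : R -> R) (a : R) :
  f @ F --> a -> (fun y => Hp (f y)) @ F --> Hp a.
Proof.
move=> hf; rewrite /Hp; apply: cvgM.
  by apply: cvgM; [exact: cvgXn|apply: cvgD; [exact: cvg_cst|exact: cvgXn]].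
apply: cvgV; first by rewrite expf_neq0 // gt_eqF // one_sq_gt0.
by apply: cvgXn; apply: cvgD; [exact: cvg_cst|exact: cvgXn].
Qed.


Lemma contDiv (f : R -> R) (c : R) : continuous f -> continuous (fun s => f s / c).
Proof. by move=> cf x; apply: cvgM; [exact: cf|exact: cvg_cst]. Qed.

Section Path.
Variables (gam G gdot Gdot : R -> curve R d).
Hypothesis hP : C1_path_A gam G gdot Gdot.
Variables (i : 'I_d) (w : R -> R).
Hypothesis cw : continuous w.

Definition gg t := RI (fun s => gam t i s * w s).
Definition gp t := RI (fun s => gdot t i s * w s).
Definition nw := Num.sqrt (RI (fun s => w s ^+ 2)).

Lemma nw_ge0 : 0 <= nw. Proof. exact: sqrtr_ge0. Qed.

Lemma gam_inA t : 0 <= t <= 1 -> inA (gam t).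
Proof. by case: hP => h1 _ _ _ ht; case: (h1 t ht). Qed.

Lemma cgam t : 0 <= t <= 1 -> continuous (gam t i).
Proof. by move=> ht; apply: inA_cont; exact: gam_inA. Qed.

Lemma cgdot t : 0 <= t <= 1 -> continuous (gdot t i).
Proof.
by case: hP => _ h2 _ _ ht; have [_ hd _ _] := h2 t ht i; exact: der_cont.
Qed.

Lemma dq_g t : 0 <= t <= 1 ->
  (fun h => (gg (t + h) - gg t) / h) @ within (fun h => h != 0 /\ 0 <= t + h <= 1) (nbhs 0)
  --> gp t.
Proof.
move=> ht; have h3 := hP; case: h3 => _ _ h3 _.
apply: (@squeeze0 _ _ _ _ _ nw _ (h3 t ht)).
rewrite near_withinE; apply: nearW => h [hn hth].
have c1 := cgam _ hth; have c2 := cgam _ ht; have c3 := cgdot _ ht.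
have ce : continuous (fun s => (gam (t + h) i s - gam t i s) / h - gdot t i s).
  by apply: contB => //; apply: contDiv; exact: contB.
have -> : (gg (t + h) - gg t) / h - gp t =
    RI (fun s => ((gam (t + h) i s - gam t i s) / h - gdot t i s) * w s).
  have k1 : continuous (fun s => gam (t + h) i s * w s) := contM _ _ c1 cw.
  have k2 : continuous (fun s => gam t i s * w s) := contM _ _ c2 cw.
  have k3 : continuous (fun s => gdot t i s * w s) := contM _ _ c3 cw.
  have k12 := contB _ _ k1 k2.
  have k4 := contZ h^-1 _ k12.
  rewrite /gg /gp -(RIB _ _ k1 k2) mulrC -(RIZ h^-1 _ k12) -(RIB _ _ k4 k3).
  congr Rintegral; apply/funext => s.
  by rewrite [in RHS]mulrBl -[in LHS]mulrBl -mulrA mulrCA.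
apply: le_trans (CSw _ _ ce cw) _.
apply: ler_wpM2r; first exact: nw_ge0.
apply: ler_wsqrtr.
exact: (comp_le_H2sq (fun i s => (gam (t + h) i s - gam t i s) / h - gdot t i s)
          (fun i s => (G (t + h) i s - G t i s) / h - Gdot t i s) i).
Qed.


Lemma gp_cont (t : R) : 0 <= t <= 1 ->
  gp @ within (fun u => 0 <= u <= 1) (nbhs t) --> gp t.
Proof.
move=> ht; have h4 := hP; case: h4 => _ _ _ h4.
apply: (@squeeze0 _ _ _ _ _ nw _ (h4 t ht)).
rewrite near_withinE; apply: nearW => u hu.
have c1 := cgdot _ hu; have c2 := cgdot _ ht.
have k1 : continuous (fun s => gdot u i s * w s) := contM _ _ c1 cw.
have k2 : continuous (fun s => gdot t i s * w s) := contM _ _ c2 cw.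
have -> : gp u - gp t = RI (fun s => (gdot u i s - gdot t i s) * w s).
  rewrite /gp -(RIB _ _ k1 k2); congr Rintegral; apply/funext => s.
  by rewrite mulrBl.
apply: le_trans (CSw _ _ (contB _ _ c1 c2) cw) _.
apply: ler_wpM2r; first exact: nw_ge0.
apply: ler_wsqrtr.
exact: (comp_le_H2sq (fun i s => gdot u i s - gdot t i s)
          (fun i s => Gdot u i s - Gdot t i s) i).
Qed.

Lemma g_cont (t : R) (S' : set R) r : 0 <= t <= 1 -> 0 < r ->
  (forall u, S' u -> `|t - u| < r -> 0 <= u <= 1) ->
  gg @ within S' (nbhs t) --> gg t.
Proof.
move=> ht r0 hS.
have := @dq_cont gg t (gp t) r (fun u => 0 <= u <= 1) S' r0 hS (dq_g _ ht).
exact.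
Qed.

Lemma g_der (t : R) : 0 < t < 1 -> is_derive t 1 gg (gp t).
Proof.
move=> /andP[t0 t1].
have ht : 0 <= t <= 1 by apply/andP; split; lra.
have hc := dq_g _ ht.
have hc' : (fun h => (gg (t + h) - gg t) / h) @ 0^' --> gp t.
  apply: within_sub hc.
  apply/nbhs_ballP; exists (Num.min t (1 - t)).
    by rewrite /= lt_min t0 subr_gt0.
  move=> h /= hb hn; split => //.
  move: hb; rewrite /ball /= sub0r normrN lt_min => /andP[].
  rewrite !ltr_norml => /andP[? ?] /andP[? ?]; apply/andP; split; lra.
have ef : (fun h => h^-1 *: ((gg \o shift t) (h *: 1) - gg t)) =
          (fun h => (gg (t + h) - gg t) / h).
  apply/funext => h; rewrite /=.
  change (h^-1 * (gg (h * 1 + t) - gg t) = (gg (t + h) - gg t) / h).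
  by rewrite mulr1 mulrC (addrC h t).
apply: DeriveDef; rewrite /derivable /derive ef.
  exact: cvgP hc'.
exact: cvg_lim hc'.
Qed.

Definition kk t := H (gg t).
Definition kp t := Hp (gg t) * gp t.

Lemma eJ : `[0, 1]%classic = (fun u : R => 0 <= u <= 1).
Proof. by apply/funext => u; apply/propext; rewrite /= in_itv. Qed.

Lemma kp_cont : {within `[0, 1], continuous kp}.
Proof.
apply/subspace_continuousP => t; rewrite eJ => ht.
apply: cvgM; last exact: gp_cont.
apply: Hp_cvg; apply: (g_cont t (fun u => 0 <= u <= 1) 1 ht ltr01) => u hu _; exact: hu.
Qed.

Lemma kk_der (t : R) : 0 < t < 1 -> is_derive t 1 kk (kp t).
Proof. by move=> ht; apply: H_der; exact: g_der. Qed.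

Lemma kk_LR : derivable_oo_LRcontinuous kk 0 1.
Proof.
split.
- move=> t; rewrite in_itv /= => ht; have := kk_der _ ht; by case.
- apply: H_cvg; apply: (@g_cont 0 (fun u => 0 < u) 1) => //; first by rewrite lexx ler01.
  move=> u u0; rewrite sub0r normrN => hu; apply/andP; split; first exact: ltW.
  by move: hu; rewrite gtr0_norm // => /ltW.
- apply: H_cvg; apply: (@g_cont 1 (fun u => u < 1) 1) => //; first by rewrite lexx ler01.
  move=> u u1 hu; apply/andP; split; last exact: ltW.
  move: hu; rewrite gtr0_norm ?subr_gt0 //; lra.
Qed.

Lemma kk_deriv : {in `]0, 1[, derive1 kk =1 kp}.
Proof.
move=> t; rewrite in_itv /= => ht.
by rewrite derive1E; have := kk_der _ ht => hd; exact: derive_val.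
Qed.

Lemma FTC_kk : (\int[mu]_(x in J) (kp x)%:E)%E = ((kk 1)%:E - (kk 0)%:E)%E.
Proof. exact: continuous_FTC2 ltr01 kp_cont kk_LR kk_deriv. Qed.

Definition Cw := RI (fun s => `|w s|).
Definition Kc := 3 * Num.sqrt Cw * nw.
Definition Fp t := L2norm (gdot t) * Num.sqrt (curve_length (gam t)).

Lemma Kc_ge0 : 0 <= Kc.
Proof. by rewrite /Kc; apply: mulr_ge0; [apply: mulr_ge0 => //; exact: sqrtr_ge0|exact: nw_ge0]. Qed.

Lemma Fp_ge0 t : 0 <= Fp t.
Proof. by rewrite /Fp; apply: mulr_ge0; [exact: sqrtr_ge0|exact: sqrtr_ge0]. Qed.

Lemma kp_bound t : 0 <= t <= 1 -> `|kp t| <= Kc * Fp t.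
Proof.
move=> ht.
have hA := gam_inA _ ht.
set L := curve_length (gam t).
have L0 : 0 <= L by case: hA => _ /ltW.
have hg : `|gg t| <= L * Cw := gbound (gam t) i w hA cw.
have h1 : Hp (gg t) <= 3 * (Num.sqrt L * Num.sqrt Cw).
  apply: le_trans (Hp_bound _) _; rewrite -sqrtrM //.
  by apply: ler_wpM2l => //; apply: ler_wsqrtr.
have h2 : `|gp t| <= L2norm (gdot t) * nw.
  apply: le_trans (CSw _ _ (cgdot _ ht) cw) _.
  by apply: ler_wpM2r; [exact: nw_ge0|exact: comp_le_L2].
rewrite /kp normrM (ger0_norm (Hp_ge0 _)).
apply: le_trans (ler_pM (Hp_ge0 _) (normr_ge0 _) h1 h2) _.
have E : 3 * (Num.sqrt L * Num.sqrt Cw) * (L2norm (gdot t) * nw) = Kc * Fp t.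
  by rewrite /Kc /Fp -/L; ring.
by rewrite E.
Qed.

Lemma path_lb : ((`|H (gg 1) - H (gg 0)| / (Kc + 1))%:E <= path_length gam gdot)%E.
Proof.
have K1 : 0 < Kc + 1 by have := Kc_ge0; lra.
have hI : mu.-integrable J (EFin \o kp).
  by apply: continuous_compact_integrable; [exact: segment_compact|exact: kp_cont].
have ckp : forall t, J t -> kp @ within J (nbhs t) --> kp t.
  by move=> t Jt; move/subspace_continuousP: kp_cont; apply.
have ca : {within J, continuous (fun t => `|kp t|)}.
  by apply/subspace_continuousP => t Jt; apply: cvg_norm; exact: ckp.
have cph : {within J, continuous (fun t => (Kc + 1)^-1 * `|kp t|)}.
  apply/subspace_continuousP => t Jt; apply: cvgM; first exact: cvg_cst.
  by apply: cvg_norm; exact: ckp.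
have hIa : mu.-integrable J (EFin \o (fun t => `|kp t|)).
  by apply: continuous_compact_integrable; [exact: segment_compact|exact: ca].
have hIp : mu.-integrable J (EFin \o (fun t => (Kc + 1)^-1 * `|kp t|)).
  by apply: continuous_compact_integrable; [exact: segment_compact|exact: cph].
have s1 : RI kp = kk 1 - kk 0 by rewrite /Rintegral FTC_kk -EFinB.
have s2 : `|RI kp| <= RI (fun t => `|kp t|).
  by apply: le_normr_Rintegral => //; exact: mI01.
have s3 : RI (fun t => (Kc + 1)^-1 * `|kp t|) = (Kc + 1)^-1 * RI (fun t => `|kp t|).
  by apply: RintegralZl => //; exact: mI01.
have s4 : (RI (fun t => (Kc + 1)^-1 * `|kp t|))%:E =
    (\int[mu]_(t in J) ((Kc + 1)^-1 * `|kp t|)%:E)%E.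
  by rewrite /Rintegral fineK //; apply: (integrable_fin_num _ hIp); exact: mI01.
apply: (@le_trans _ _ (RI (fun t => (Kc + 1)^-1 * `|kp t|))%:E).
  rewrite lee_fin s3 mulrC; apply: ler_wpM2l; first by rewrite invr_ge0 ltW.
  by rewrite /kk -s1.
rewrite s4 /path_length; apply: nomeas_le => t Jt.
  by rewrite lee_fin mulr_ge0 // invr_ge0 ltW.
rewrite lee_fin ler_pdivrMl //.
apply: le_trans (kp_bound t (proj1 (inJ t) Jt)) _.
by apply: ler_wpM2r; [exact: Fp_ge0|lra].
Qed.
End Path.

Lemma inA_per (eta : curve R d) j : inA eta -> periodic1 (eta j).
Proof. by case=> [[hH _] _ _]; have [g [hp _ _ _]] := hH j. Qed.

Lemma main (eta0 eta1 : curve R d) :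
  inA eta0 -> inA eta1 -> eta0 <> eta1 -> (0 < distA eta0 eta1)%E.
Proof.
move=> h0 h1 hne.
have [i [s0 [hs hn]]] : exists i s, 0 <= s <= 1 /\ eta0 i s != eta1 i s.
  apply: contrapT => hcon; apply: hne; apply/funext => i.
  apply: per_eq; [exact: inA_per|exact: inA_per|] => s hs.
  apply: contrapT => hneq; apply: hcon; exists i, s; split => //; exact/eqP.
set w := fun s => eta0 i s - eta1 i s.
have c0 := inA_cont _ h0 i; have c1 := inA_cont _ h1 i.
have cw : continuous w := contB _ _ c0 c1.
have wpos : 0 < RI (fun s => w s ^+ 2).
  by apply: (pos_int w s0 cw hs); rewrite /w subr_eq0.
set a := RI (fun s => eta0 i s * w s).
set b := RI (fun s => eta1 i s * w s).
have k0 : continuous (fun s => eta0 i s * w s) := contM _ _ c0 cw.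
have k1 : continuous (fun s => eta1 i s * w s) := contM _ _ c1 cw.
have hab : a - b = RI (fun s => w s ^+ 2).
  rewrite /a /b -(RIB _ _ k0 k1); congr Rintegral; apply/funext => s.
  by rewrite -mulrBl expr2.
have habn : H b != H a.
  apply/eqP => /H_inj eab; move: wpos; rewrite -hab eab subrr; lra.
set c := `|H b - H a| / (Kc w + 1).
have K1 : 0 < Kc w + 1 by have := Kc_ge0 w; lra.
have cpos : 0 < c by rewrite /c divr_gt0 // normr_gt0 subr_eq0.
apply: (@lt_le_trans _ _ c%:E); first by rewrite lte_fin.
apply: le_ereal_inf_tmp => l [gam [G [gdot [Gdot [hP e0 e1 ->]]]]].
have := path_lb gam G gdot Gdot hP i w cw; rewrite /gg e0 e1.
by [].
Qed.
End S.

Theorem proposition2p1 (R : realType) (d : nat) (hd : (2 <= d)%N)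
  (eta0 eta1 : curve R d) :
  inA eta0 -> inA eta1 -> eta0 <> eta1 ->
  (0 < distA eta0 eta1)%E.
Proof. exact: main. Qed.
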